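(* Let $n_j:=2^{2^j}$ and $t_n:=1/n$. For $i>j\ge100$ and $0\le k\le n_j$ we have $f_{n_i}(t_{n_j})=0$ and $f_{n_i}(x_{k,n_j})=0$.
   Context: Nodes: $x_{k,n}:=2k/n-1$, $k=0,\dots,n$. For $m$ such that $\sqrt m$ is an integer multiple of $4$, define $f_m:\mathbb{R}\to\mathbb{R}$ by: $f_m(x)=0$ for $x<1/m$ or $x\ge(\sqrt m-3)/m$; $f_m(x)=x-1/m$ for $1/m\le x<2/m$; $f_m(x)=\frac{4p+3}{m}-x$ for $0\le p\le\frac{\sqrt m-8}{4}$ and $\frac{4p+2}{m}\le x<\frac{4p+4}{m}$; $f_m(x)=x-\frac{4p+1}{m}$ for $1\le p\le\frac{\sqrt m-8}{4}$ and $\frac{4p}{m}\le x<\frac{4p+2}{m}$; $f_m(x)=x-\frac{\sqrt m-3}{m}$ for $\frac{\sqrt m-4}{m}\le x<\frac{\sqrt m-3}{m}$. *)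

(* Defs.v *)
From Stdlib Require Import Reals Lra ClassicalEpsilon.
Open Scope R_scope.

Definition node (k n : nat) : R := 2 * INR k / INR n - 1.

(* The piecewise definition of f_m, as a graph relation: f_graph m x y
   means "f_m(x) = y" according to the clauses of the paper
   (meaningful when sqrt m is an integer multiple of 4). *)
Definition f_graph (m : nat) (x y : R) : Prop :=
  let M := INR m in
  let s := sqrt M in
  ((x < 1 / M \/ (s - 3) / M <= x) /\ y = 0)
  \/ (1 / M <= x < 2 / M /\ y = x - 1 / M)
  \/ (exists p : nat, INR p <= (s - 8) / 4 /\
        (4 * INR p + 2) / M <= x < (4 * INR p + 4) / M /\
        y = (4 * INR p + 3) / M - x)
  \/ (exists p : nat, (1 <= p)%nat /\ INR p <= (s - 8) / 4 /\
        (4 * INR p) / M <= x < (4 * INR p + 2) / M /\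
        y = x - (4 * INR p + 1) / M)
  \/ ((s - 4) / M <= x < (s - 3) / M /\ y = x - (s - 3) / M).

(* f_m(x): the (unique, for admissible m) value given by the clauses. *)
Definition fm (m : nat) (x : R) : R :=
  epsilon (inhabits 0) (fun y => f_graph m x y).

Definition nn (j : nat) : nat := (2 ^ (2 ^ j))%nat.

Definition t (n : nat) : R := 1 / INR n.

(* Main.v *)
Require Import Defs.
From Stdlib Require Import Reals Lra Lia ClassicalEpsilon.
Open Scope R_scope.

Lemma dle (M e x : R) : 0 < M -> (e / M <= x <-> e <= x * M).
Proof.
  intros HM; split; intros H.
  - apply Rmult_le_compat_r with (r := M) in H; [|lra].
    unfold Rdiv in H; rewrite Rmult_assoc, Rinv_l in H; lra.
  - apply Rmult_le_compat_r with (r := / M) in H; [|left; apply Rinv_0_lt_compat; lra].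
    rewrite Rmult_assoc, Rinv_r in H; unfold Rdiv; lra.
Qed.

Lemma dlt (M e x : R) : 0 < M -> (x < e / M <-> x * M < e).
Proof.
  intros HM; split; intros H.
  - destruct (Rle_or_lt e (x*M)) as [H1|H1]; auto.
    apply (dle M e x HM) in H1; lra.
  - destruct (Rle_or_lt (e/M) x) as [H1|H1]; auto.
    apply (dle M e x HM) in H1; lra.
Qed.

Lemma uniq0 (m : nat) (x y : R) :
  0 < INR m -> 5 <= sqrt (INR m) ->
  (x < 1 / INR m \/ (sqrt (INR m) - 3) / INR m <= x) ->
  f_graph m x y -> y = 0.
Proof.
  intros HM Hs Hx H. unfold f_graph in H.
  set (M := INR m) in *. set (s := sqrt M) in *.
  assert (Hp : 0 <= s) by (apply sqrt_pos).
  destruct Hx as [Hx|Hx]; [apply (dlt M) in Hx; auto | apply (dle M) in Hx; auto].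
  - destruct H as [[_ H]|[[[H1 H2] _]|[[p [Hp1 [[H1 H2] _]]]|[[p [Hp0 [Hp1 [[H1 H2] _]]]]|[[H1 H2] _]]]]]; auto;
      apply (dle M) in H1; auto; try lra.
    + assert (0 <= INR p) by apply pos_INR. lra.
    + apply le_INR in Hp0. simpl in Hp0. lra.
  - destruct H as [[_ H]|[[[H1 H2] _]|[[p [Hp1 [[H1 H2] _]]]|[[p [Hp0 [Hp1 [[H1 H2] _]]]]|[[H1 H2] _]]]]]; auto;
      apply (dlt M) in H2; auto; try lra.
Qed.

Lemma fm0 (m : nat) (x : R) :
  0 < INR m -> 5 <= sqrt (INR m) ->
  (x < 1 / INR m \/ (sqrt (INR m) - 3) / INR m <= x) -> fm m x = 0.
Proof.
  intros HM Hs Hx. unfold fm.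
  apply (uniq0 m x); auto.
  apply epsilon_spec. exists 0. left. split; auto.
Qed.

Theorem lemma3 (i j : nat) (hj : (100 <= j)%nat) (hij : (j < i)%nat) :
  fm (nn i) (t (nn j)) = 0 /\
  (forall k : nat, (k <= nn j)%nat -> fm (nn i) (node k (nn j)) = 0).
Proof.
  destruct i as [|i']; [lia|].
  assert (Hsq : nn (S i') = (nn i' * nn i')%nat).
  { unfold nn. rewrite Nat.pow_succ_r', <- Nat.pow_add_r. f_equal; lia. }
  assert (Hle : (nn j <= nn i')%nat).
  { unfold nn. apply Nat.pow_le_mono_r; [lia|]. apply Nat.pow_le_mono_r; lia. }
  assert (H5 : (8 <= nn i')%nat).
  { unfold nn. change 8%nat with (2^3)%nat. apply Nat.pow_le_mono_r; [lia|].
    apply Nat.le_trans with (2^2)%nat; [simpl; lia|]. apply Nat.pow_le_mono_r; lia. }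
  assert (H1 : (1 <= nn j)%nat).
  { unfold nn. apply Nat.le_trans with (2^0)%nat; [simpl; lia|]. apply Nat.pow_le_mono_r; lia. }
  rewrite Hsq.
  set (a := INR (nn i')) in *. set (b := INR (nn j)) in *.
  apply le_INR in Hle, H5, H1. fold a b in Hle, H5, H1. simpl in H5, H1.
  assert (Hs : sqrt (a * a) = a) by (apply sqrt_square; lra).
  assert (HM : 0 < INR (nn i' * nn i')) by (rewrite mult_INR; fold a; nra).
  assert (Key : forall x, 1 / b <= x -> (sqrt (a*a) - 3) / (a*a) <= x).
  { intros x Hx. rewrite Hs. apply (dle (a*a)); [nra|].
    apply (dle b) in Hx; [|lra]. nra. }
  assert (Hs5 : 5 <= sqrt (INR (nn i' * nn i'))) by (rewrite mult_INR; fold a; lra).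
  split.
  - apply fm0; auto. right. rewrite mult_INR. apply Key. unfold t. fold b. lra.
  - intros k Hk. apply fm0; auto. rewrite mult_INR. unfold node. fold b.
    destruct (Compare_dec.le_lt_dec (2*k) (nn j)) as [Hk2|Hk2].
    + left. apply le_INR in Hk2. rewrite mult_INR in Hk2. simpl in Hk2. fold b in Hk2.
      assert (2 * INR k / b - 1 <= 0).
      { assert (2 * INR k / b <= 1); [|lra].
        apply (dle b); lra. }
change (INR (nn i')) with a.       assert (0 < 1 / (a*a)) by (apply Rdiv_lt_0_compat; [lra | apply Rmult_lt_0_compat; lra]). lra.
    + right. apply Key. apply le_INR in Hk2. rewrite mult_INR, S_INR in Hk2. change (INR (nn j)) with b in Hk2. change (INR 2) with 2 in Hk2.
      
      apply (dle b); [lra|].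
      assert (2 * INR k / b * b = 2 * INR k) by (field; lra).
      rewrite Rmult_minus_distr_r, H. lra.
Qed.
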